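(* Let $a$ be a real number. The inequality $\Theta_{n,a}(x,y)>0$ holds for all integers $n\ge1$ and all real $x,y\in(0,\pi)$ if and only if $a\ge1$.
   Context: For a real number $a$ and integers $0\le m$, $\binom{m+a}{m}=\frac{(a+1)(a+2)\cdots(a+m)}{m!}$ (equal to $1$ when $m=0$). For an integer $n\ge1$, $\Theta_{n,a}(x,y)=\sum_{j=1}^n\binom{n+a-j}{n-j}\frac{\sin(jx)\sin(jy)}{j}$. *)

(* Defs.v *)
From Stdlib Require Import Reals Factorial.
Open Scope R_scope.

Fixpoint rising_prod (a : R) (m : nat) : R :=
  match m with
  | O => 1
  | S k => rising_prod a k * (a + INR (S k))
  end.

(* binom(m+a, m) = (a+1)(a+2)...(a+m) / m!,  equal to 1 when m = 0. *)
Definition gbinom (m : nat) (a : R) : R := rising_prod a m / INR (fact m).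

(* Theta_{n,a}(x,y) = sum_{j=1}^n binom(n+a-j, n-j) sin(jx) sin(jy) / j. *)
Definition Theta (n : nat) (a x y : R) : R :=
  sum_f_R0 (fun i => let j := S i in
    gbinom (n - j)%nat a * sin (INR j * x) * sin (INR j * y) / INR j) (n - 1).

(* Main.v *)
Require Import Defs.
From Stdlib Require Import Reals Lra Lia Factorial.
Open Scope R_scope.

Fixpoint sm (f : nat -> R) (n : nat) : R :=
  match n with O => 0 | S k => sm f k + f (S k) end.

Lemma sm_ext f g n : (forall j, (1 <= j <= n)%nat -> f j = g j) -> sm f n = sm g n.
Proof.
  induction n; simpl; intros H; [reflexivity|].
  rewrite IHn by (intros; apply H; lia). rewrite (H (S n)) by lia. reflexivity.
Qed.

Lemma sm_S f n : sm f (S n) = sm f n + f (S n).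
Proof. reflexivity. Qed.

Lemma sm_plus f g n : sm (fun j => f j + g j) n = sm f n + sm g n.
Proof. induction n; simpl; [lra|]. rewrite IHn; lra. Qed.

Lemma sm_scal c f n : sm (fun j => c * f j) n = c * sm f n.
Proof. induction n; simpl; [lra|]. rewrite IHn; lra. Qed.

Lemma sm_shift f n : sm f (S n) = f 1%nat + sm (fun k => f (S k)) n.
Proof. induction n; simpl in *; [lra|]. rewrite IHn; lra. Qed.

Lemma sm_nonneg f n : (forall j, (1 <= j <= n)%nat -> 0 <= f j) -> 0 <= sm f n.
Proof.
  induction n; simpl; intros H; [lra|].
  assert (0 <= sm f n) by (apply IHn; intros; apply H; lia).
  assert (0 <= f (S n)) by (apply H; lia). lra.
Qed.

Lemma sumR0_sm g m : sum_f_R0 g m = sm (fun j => g (pred j)) (S m).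
Proof. induction m; simpl in *; [lra|]. rewrite IHm; simpl; lra. Qed.

Lemma Theta_sm n a x y : (1 <= n)%nat ->
  Theta n a x y = sm (fun j => gbinom (n - j) a * (sin (INR j * x) * sin (INR j * y) / INR j)) n.
Proof.
  intros Hn. unfold Theta. destruct n as [|m]; [lia|].
  replace (S m - 1)%nat with m by lia. rewrite sumR0_sm.
  apply sm_ext; intros [|j] Hj; [lia|]; cbv zeta; simpl pred; field; apply not_0_INR; lia.
Qed.

Lemma conv d s n :
  sm (fun j => sum_f_R0 d (n - j) * s j) n = sm (fun k => d (n - k)%nat * sm s k) n.
Proof.
  assert (HL : forall n, sm (fun j => sum_f_R0 d (S n - j) * s j) (S n)
     = sm (fun j => sum_f_R0 d (n - j) * s j) n + sm (fun j => d (S n - j)%nat * s j) (S n)).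
  { intros m. rewrite !sm_S. replace (S m - S m)%nat with O by lia. simpl sum_f_R0.
    rewrite (sm_ext _ (fun j => sum_f_R0 d (m - j) * s j + d (S m - j)%nat * s j)).
    - rewrite sm_plus. lra.
    - intros [|j] Hj; [lia|]. cbv beta. replace (m - j)%nat with (S (m - S j)) by lia. rewrite tech5. replace (S m - S j)%nat with (S (m - S j)) by lia. ring. }
  assert (HR : forall n, sm (fun k => d (S n - k)%nat * sm s k) (S n)
     = sm (fun k => d (n - k)%nat * sm s k) n + sm (fun j => d (S n - j)%nat * s j) (S n)).
  { intros m. rewrite !sm_shift. replace (S m - 1)%nat with m by lia.
    rewrite (sm_ext (fun k => d (m - k)%nat * sm s (S k))
               (fun k => d (m - k)%nat * sm s k + d (m - k)%nat * s (S k))).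
    - rewrite sm_plus. replace (m - 0)%nat with m by lia. change (sm (fun k => s (S k)) 0) with 0. change (fun k => d (S m - S k)%nat * s (S k)) with (fun k => d (m - k)%nat * s (S k)). lra.
    - intros. rewrite sm_S. ring. }
  induction n.
  - reflexivity.
  - rewrite HL, HR, IHn. reflexivity.
Qed.

Lemma rp_shift c m : rising_prod c (S m) = (c + 1) * rising_prod (c + 1) m.
Proof.
  induction m.
  - simpl. ring.
  - change (rising_prod c (S (S m))) with (rising_prod c (S m) * (c + INR (S (S m)))).
    rewrite IHm. change (rising_prod (c+1) (S m)) with (rising_prod (c+1) m * (c + 1 + INR (S m))).
    rewrite !S_INR. ring.
Qed.

Lemma gbinom0 c : gbinom 0 c = 1.
Proof. unfold gbinom. simpl. field. Qed.

Lemma pascal c m : gbinom (S m) (c + 1) = gbinom m (c + 1) + gbinom (S m) c.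
Proof.
  unfold gbinom. rewrite (rp_shift c m).
  change (rising_prod (c+1) (S m)) with (rising_prod (c+1) m * (c + 1 + INR (S m))).
  rewrite fact_simpl, mult_INR.
  assert (INR (fact m) <> 0) by (apply not_0_INR; apply fact_neq_0).
  assert (INR (S m) <> 0) by (apply not_0_INR; lia).
  rewrite S_INR in *. field. split; assumption.
Qed.

Lemma gbinom_sum a m : gbinom m a = sum_f_R0 (fun i => gbinom i (a - 1)) m.
Proof.
  induction m.
  - simpl. rewrite !gbinom0. reflexivity.
  - rewrite tech5, <- IHm. replace a with (a - 1 + 1) at 1 2 by ring.
    rewrite pascal. reflexivity.
Qed.

Lemma gbinom_nonneg c m : -1 <= c -> 0 <= gbinom m c.
Proof.
  intros Hc. unfold gbinom. apply Rmult_le_pos.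
  - induction m; [simpl; lra|]. change (rising_prod c (S m)) with (rising_prod c m * (c + INR (S m))). apply Rmult_le_pos; [assumption|].
    rewrite S_INR. pose proof (pos_INR m). lra.
  - left. apply Rinv_0_lt_compat. apply lt_0_INR. pose proof (lt_O_fact m). lia.
Qed.

Lemma W_eq k s : sm (fun j => (INR (k - j) + 1) * s j) k = sm (fun m => sm s m) k.
Proof.
  transitivity (sm (fun m => (fun _ => 1) (k - m)%nat * sm s m) k).
  2:{ apply sm_ext; intros; ring. }
  rewrite <- (conv (fun _ => 1) s k). apply sm_ext. intros j Hj. rewrite sum_cte, S_INR. ring.
Qed.

Lemma D_id t k : 2 * (1 - cos t) * sm (fun j => sin (INR j * t)) k
   = sin t + sin (INR k * t) - sin (INR (S k) * t).
Proof.
  induction k.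
  - simpl. replace (0 * t) with 0 by ring. replace (1 * t) with t by ring. rewrite sin_0. ring.
  - rewrite sm_S, Rmult_plus_distr_l, IHk.
    replace (INR (S (S k)) * t) with (INR (S k) * t + t) by (rewrite (S_INR (S k)); ring).
    replace (INR k * t) with (INR (S k) * t - t) by (rewrite S_INR; ring).
    rewrite sin_plus, sin_minus. ring.
Qed.

Lemma P_id t k : 2 * (1 - cos t) * sm (fun m => sm (fun j => sin (INR j * t)) m) k
   = (INR k + 1) * sin t - sin (INR (S k) * t).
Proof.
  induction k.
  - simpl. replace (1 * t) with t by ring. ring.
  - rewrite sm_S, Rmult_plus_distr_l, IHk, D_id, (S_INR k). ring.
Qed.

Lemma sin_bound t m : 0 <= sin t -> Rabs (sin (INR m * t)) <= INR m * sin t.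
Proof.
  intros Hs. induction m.
  - simpl. replace (0 * t) with 0 by ring. rewrite sin_0, Rabs_R0. lra.
  - rewrite S_INR. replace ((INR m + 1) * t) with (INR m * t + t) by ring.
    rewrite sin_plus.
    pose proof (COS_bound t). pose proof (COS_bound (INR m * t)).
    assert (Rabs (sin (INR m * t) * cos t) <= Rabs (sin (INR m * t))).
    { rewrite Rabs_mult. pose proof (Rabs_pos (sin (INR m * t))).
      apply Rle_trans with (Rabs (sin (INR m * t)) * 1); [|lra].
      apply Rmult_le_compat_l; [assumption|]. apply Rabs_le; lra. }
    assert (Rabs (cos (INR m * t) * sin t) <= sin t).
    { rewrite Rabs_mult, (Rabs_pos_eq (sin t)) by lra.
      apply Rle_trans with (1 * sin t); [|lra].
      apply Rmult_le_compat_r; [assumption|]. apply Rabs_le; lra. }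
    pose proof (Rabs_triang (sin (INR m * t) * cos t) (cos (INR m * t) * sin t)). lra.
Qed.

Lemma sin_strict t m : 0 < t < PI -> sin (INR (S (S m)) * t) < INR (S (S m)) * sin t.
Proof.
  intros Ht. assert (Hs : 0 < sin t) by (apply sin_gt_0; lra).
  assert (Hc : Rabs (cos t) < 1).
  { pose proof (sin2_cos2 t). unfold Rsqr in *. apply Rabs_def1; nra. }
  replace (INR (S (S m)) * t) with (INR (S m) * t + t) by (rewrite (S_INR (S m)); ring).
  rewrite sin_plus, (S_INR (S m)).
  pose proof (sin_bound t (S m) ltac:(lra)).
  pose proof (sin2_cos2 (INR (S m) * t)). unfold Rsqr in *.
  pose proof (COS_bound (INR (S m) * t)).
  destruct (Req_dec (sin (INR (S m) * t)) 0) as [E|E].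
  - rewrite E. assert (0 < INR (S m)) by (apply lt_0_INR; lia).
    assert (cos (INR (S m) * t) * sin t <= sin t) by nra. nra.
  - assert (Rabs (sin (INR (S m) * t) * cos t) < Rabs (sin (INR (S m) * t))).
    { rewrite Rabs_mult. pose proof (Rabs_pos_lt _ E). nra. }
    assert (cos (INR (S m) * t) * sin t <= sin t) by nra.
    pose proof (Rle_abs (sin (INR (S m) * t) * cos t)). lra.
Qed.

Lemma P_pos t k : (1 <= k)%nat -> 0 < t < PI ->
  0 < sm (fun j => (INR (k - j) + 1) * sin (INR j * t)) k.
Proof.
  intros Hk Ht. rewrite W_eq.
  assert (Hs : 0 < sin t) by (apply sin_gt_0; lra).
  assert (Hc : cos t < 1).
  { pose proof (sin2_cos2 t). unfold Rsqr in *. pose proof (COS_bound t). nra. }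
  pose proof (P_id t k).
  destruct k as [|m]; [lia|].
  pose proof (sin_strict t m Ht). rewrite <- (S_INR (S m)) in H.
  nra.
Qed.

From Coquelicot Require Import Coquelicot.

Lemma is_derive_sm (F : nat -> R -> R) (F' : nat -> R -> R) n t :
  (forall j, (1 <= j <= n)%nat -> is_derive (F j) t (F' j t)) ->
  is_derive (fun t => sm (fun j => F j t) n) t (sm (fun j => F' j t) n).
Proof.
  induction n; intros H.
  - simpl. auto_derive; auto.
  - simpl. apply (is_derive_plus (fun t => sm (fun j => F j t) n) (F (S n))).
    + apply IHn. intros; apply H; lia.
    + apply H; lia.
Qed.

Definition G k t := sm (fun j => (INR (k - j) + 1) * cos (INR j * t) / INR j) k.

Lemma G_derive k t : is_derive (G k) t (- sm (fun j => (INR (k - j) + 1) * sin (INR j * t)) k).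
Proof.
  unfold G. rewrite <- (Rmult_1_l (sm _ k)), Ropp_mult_distr_l, <- sm_scal.
  apply (is_derive_sm (fun j t => (INR (k - j) + 1) * cos (INR j * t) / INR j)
                      (fun j t => -1 * ((INR (k - j) + 1) * sin (INR j * t)))).
  intros j Hj. assert (INR j <> 0) by (apply not_0_INR; lia).
  auto_derive; [auto|]. field. assumption.
Qed.

Lemma G_decr k u v : (1 <= k)%nat -> 0 <= u -> u < v -> v <= PI -> G k v < G k u.
Proof.
  intros Hk Hu Huv Hv.
  destruct (MVT_cor2 (G k) (fun t => - sm (fun j => (INR (k - j) + 1) * sin (INR j * t)) k) u v Huv)
    as [c [Hc1 Hc2]].
  - intros c _. apply is_derive_Reals. apply G_derive.
  - pose proof (P_pos c k Hk ltac:(lra)). nra.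
Qed.

Lemma T_G k x y u v :
  (forall j, cos (INR j * u) = cos (INR j * (x - y))) ->
  (forall j, cos (INR j * v) = cos (INR j * (x + y))) ->
  sm (fun j => (INR (k - j) + 1) * (sin (INR j * x) * sin (INR j * y) / INR j)) k
  = / 2 * (G k u + -1 * G k v).
Proof.
  intros Hu Hv. unfold G. rewrite <- !sm_scal, <- sm_plus, <- sm_scal.
  apply sm_ext. intros j Hj. rewrite Hu, Hv.
  assert (INR j <> 0) by (apply not_0_INR; lia).
  replace (INR j * (x - y)) with (INR j * x - INR j * y) by ring.
  replace (INR j * (x + y)) with (INR j * x + INR j * y) by ring.
  rewrite cos_minus, cos_plus. field. assumption.
Qed.

Lemma T_pos k x y : (1 <= k)%nat -> 0 < x < PI -> 0 < y < PI ->
  0 < sm (fun j => (INR (k - j) + 1) * (sin (INR j * x) * sin (INR j * y) / INR j)) k.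
Proof.
  intros Hk Hx Hy.
  assert (Hu : forall j, cos (INR j * Rabs (x - y)) = cos (INR j * (x - y))).
  { intros j. destruct (Rcase_abs (x - y)) as [h|h].
    - rewrite Rabs_left by assumption. rewrite <- cos_neg. f_equal. ring.
    - rewrite Rabs_right by assumption. reflexivity. }
  destruct (Rle_dec (x + y) PI) as [h|h].
  - rewrite (T_G k x y (Rabs (x - y)) (x + y) Hu (fun j => eq_refl)).
    pose proof (G_decr k (Rabs (x - y)) (x + y) Hk (Rabs_pos _)).
    assert (Rabs (x - y) < x + y) by (apply Rabs_def1; lra).
    specialize (H H0 h). lra.
  - assert (Hv : forall j, cos (INR j * (2 * PI - (x + y))) = cos (INR j * (x + y))).
    { intros j. rewrite <- (cos_neg (INR j * (x + y))), <- (cos_period (- (INR j * (x + y))) j). f_equal. ring. }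
    rewrite (T_G k x y (Rabs (x - y)) (2 * PI - (x + y)) Hu Hv).
    pose proof (G_decr k (Rabs (x - y)) (2 * PI - (x + y)) Hk (Rabs_pos _)).
    assert (Rabs (x - y) < 2 * PI - (x + y)) by (apply Rabs_def1; lra).
    assert (2 * PI - (x + y) <= PI) by lra.
    specialize (H H0 H1). lra.
Qed.

Lemma pos_dir a n x y : 1 <= a -> (1 <= n)%nat -> 0 < x < PI -> 0 < y < PI -> Theta n a x y > 0.
Proof.
  intros Ha Hn Hx Hy. rewrite Theta_sm by assumption.
  set (b := fun j => sin (INR j * x) * sin (INR j * y) / INR j).
  rewrite (sm_ext _ (fun j => sum_f_R0 (fun i => gbinom i (a - 1)) (n - j) * b j))
    by (intros; rewrite gbinom_sum; reflexivity).
  rewrite conv.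
  rewrite (sm_ext _ (fun k => sum_f_R0 (fun i => gbinom i (a - 1 - 1)) (n - k) * sm b k))
    by (intros; rewrite <- gbinom_sum; reflexivity).
  rewrite conv.
  destruct n as [|n]; [lia|]. rewrite sm_S.
  replace (S n - S n)%nat with O by lia. rewrite gbinom0.
  assert (0 <= sm (fun k => gbinom (S n - k) (a - 1 - 1) * sm (fun k0 => sm b k0) k) n).
  { apply sm_nonneg. intros j Hj. apply Rmult_le_pos.
    - apply gbinom_nonneg. lra.
    - rewrite <- W_eq. destruct (Nat.eq_dec j 0); [lia|]. left. apply T_pos; auto; lia. }
  rewrite <- W_eq. pose proof (T_pos (S n) x y ltac:(lia) Hx Hy). change (fun k0 : nat => sm b k0) with (sm b) in H. unfold b in *. lra.
Qed.

Lemma neg_dir a : a < 1 -> exists x y, 0 < x < PI /\ 0 < y < PI /\ Theta 2 a x y <= 0.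
Proof.
  intros Ha. set (e := Rmin 1 ((1 - a) / 4)).
  assert (He : 0 < e) by (unfold e; apply Rmin_glb_lt; lra).
  assert (He1 : e <= 1) by (unfold e; apply Rmin_l).
  assert (He2 : e <= (1 - a) / 4) by (unfold e; apply Rmin_r).
  pose proof PI_RGT_0. pose proof PI2_1.
  exists e, (PI - e). split; [lra|]. split; [lra|].
  unfold Theta, gbinom. simpl.
  replace ((1 + 1) * e) with (2 * e) by ring.
  replace ((1 + 1) * (PI - e)) with (2 * (PI - e)) by ring.
  rewrite !sin_2a, sin_PI_x, cos_minus, sin_PI, cos_PI.
  replace (1 * e) with e by ring. replace (1 * (PI - e)) with (PI - e) by ring.
  rewrite sin_PI_x.
  pose proof (sin2_cos2 e). unfold Rsqr in *.
  pose proof (sin_lt_x e He). pose proof (sin_gt_0 e He ltac:(lra)).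
  assert (sin e * sin e < (1 - a) / 2) by nra.
  field_simplify. nra.
Qed.

Theorem theorem3p10 (a : R) :
  (forall (n : nat) (x y : R), (1 <= n)%nat ->
     0 < x < PI -> 0 < y < PI -> Theta n a x y > 0)
  <-> 1 <= a.
Proof.
  split.
  - intros H. destruct (Rlt_le_dec a 1) as [h|h]; [|assumption].
    destruct (neg_dir a h) as [x [y [Hx [Hy Ht]]]].
    specialize (H 2%nat x y ltac:(lia) Hx Hy). lra.
  - intros Ha n x y Hn Hx Hy. apply pos_dir; assumption.
Qed.
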